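(* Let $\sigma$ be a finite sequence of transitions such that $G_\sigma$ has no negative cycle, and let $n=|X|$. If $\sigma$ does not admit a pattern, then for every pair $(x,y)\in X\times X$ for which some complete p-tree with root labelled $(x,y)$ exists, there is a complete p-tree with root labelled $(x,y)$ of height at most $n^2$ whose weight is less than or equal to the weight of every complete p-tree with root labelled $(x,y)$.
   Context: Fix a finite set of clocks $X=\{x_0,\dots,x_m\}$ and a finite sequence $\sigma$ of timed-automaton transitions over $X$. A weight is a pair $(\preccurlyeq,d)$ with $\preccurlyeq\in\{<,\le\}$, $d\in\mathbb{Z}$; weights are added by $(\preccurlyeq_1,d_1)+(\preccurlyeq_2,d_2)=(\preccurlyeq,d_1+d_2)$, $\preccurlyeq$ being $<$ iff one of $\preccurlyeq_1,\preccurlyeq_2$ is $<$, and totally ordered by $(\preccurlyeq,d)<(\preccurlyeq',d')$ iff $d<d'$, or $d=d'$, $\preccurlyeq$ is $<$ and $\preccurlyeq'$ is $\le$. A weight is negative if it is smaller than $(\le,0)$. $G_\sigma$ is the transformation graph of $\sigma$ (a directed graph with weighted edges on vertex set $\{0,\dots,k\}\times X$ encoding time elapse, guards and resets of the transitions of $\sigma$). For a graph $G$ on $\{0,\dots,k\}\times X$ without negative cycles, its canonical form has an edge $u\to w$ for each pair of distinct vertices joined by a path, weighted by the minimal path weight, and $|G|$ is the canonical form restricted to columns $0$ and $k$, renumbered $0$ and $1$. p-trees (relative to $H=|G_\sigma|$): a p-tree is a finite rooted tree with weighted edges whose nodes are labelled by $\top$ or by pairs $(x,y)\in X\times X$; nodes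 labelled $\top$ are leaves. A node labelled $(x,y)$ has children of exactly one of the following forms: (a) a single child $\top$, with edge weight $e$, where $H$ has an edge $(c,x)\to(c,y)$ of weight $e$ for some $c\in\{0,1\}$; (b) a single child $(u,v)$, with edge weight $e_1+e_2$, where for some $c,c'\in\{0,1\}$ with $c\ne c'$, $H$ has edges $(c,x)\to(c',u)$ of weight $e_1$ and $(c',v)\to(c,y)$ of weight $e_2$; (c) two children $(x,z)$ and $(z,y)$ for some $z\in X$, both with edge weight $(\le,0)$. The weight of a p-tree is the sum of all its edge weights. A p-tree is complete if all leaves are labelled $\top$. The height of a tree is the maximal number of edges on a root-to-leaf path. An $(x,y)$-$(u,v)$ context is a p-tree with root labelled $(x,y)$ all of whose leaves are labelled $\top$ except exactly one leaf labelled $(u,v)$. A pattern is an $(x,y)$-$(x,y)$ context of negative weight; $\sigma$ admits a pattern if one exists. *)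

(* Defs.v *)
From HB Require Import structures.
From mathcomp Require Import all_boot all_order all_algebra.
Set Implicit Arguments. Unset Strict Implicit. Unset Printing Implicit Defensive.
Import Order.TTheory GRing.Theory Num.Theory.

(* Weights (prec, d): the boolean is [true] for "<" and [false] for "<=". *)
Definition weight := (bool * int)%type.

Definition wzero : weight := (false, 0%R).

Definition wadd (a b : weight) : weight := (a.1 || b.1, (a.2 + b.2)%R).

Definition wlt (a b : weight) : bool :=
  ((a.2 < b.2)%R) || ((a.2 == b.2) && a.1 && ~~ b.1).
Definition wle (a b : weight) : bool := wlt a b || (a == b).
Definition wneg (a : weight) : bool := wlt a wzero.

(* Timed-automaton transitions over a finite set of clocks X, with the  *)
(* reference clock x0.  A guard is a list of atomic constraints          *)
(* (x, y, (prec,d)) meaning  x - y prec d  (x0 stands for the constant 0). *)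
Record transition (X : finType) := Transition {
  guard : seq (X * X * weight);
  reset : {set X}
}.

Section Graph.
Variables (X : finType) (x0 : X) (sigma : seq (transition X)).
Local Notation k := (size sigma).
Definition vertex := ('I_k.+1 * X)%type.

Definition col_prev (i : 'I_k) : 'I_k.+1 := widen_ord (leqnSn k) i.
Definition col_next (i : 'I_k) : 'I_k.+1 := lift ord0 i.
Definition trans_at (i : 'I_k) : transition X := tnth (in_tuple sigma) i.

(* vertex carrying clock x at the moment the guard of transition i is
   checked (after time elapse, before reset) *)
Definition guard_vertex (i : 'I_k) (x : X) : vertex :=
  if x == x0 then (col_next i, x0) else (col_prev i, x).

(* An edge u -> w of weight (prec,d) encodes the
   constraint  val(u) - val(w) prec d, where val(j,x) (x <> x0) is minus the
   absolute date of the last reset of x at position j and val(j,x0) is minus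
   the current absolute date at position j (so clock x = val(j,x) - val(j,x0)).
   Transition i goes from column i to column i+1: time elapse, guard, reset. *)
Inductive Gsigma : vertex -> vertex -> weight -> Prop :=
| GS_elapse (i : 'I_k) :
    Gsigma (col_next i, x0) (col_prev i, x0) wzero
| GS_keep_fw (i : 'I_k) (x : X) : x != x0 -> x \notin reset (trans_at i) ->
    Gsigma (col_prev i, x) (col_next i, x) wzero
| GS_keep_bw (i : 'I_k) (x : X) : x != x0 -> x \notin reset (trans_at i) ->
    Gsigma (col_next i, x) (col_prev i, x) wzero
| GS_reset_fw (i : 'I_k) (x : X) : x != x0 -> x \in reset (trans_at i) ->
    Gsigma (col_next i, x) (col_next i, x0) wzero
| GS_reset_bw (i : 'I_k) (x : X) : x != x0 -> x \in reset (trans_at i) ->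
    Gsigma (col_next i, x0) (col_next i, x) wzero
| GS_guard (i : 'I_k) (x y : X) (w : weight) :
    (x, y, w) \in guard (trans_at i) ->
    Gsigma (guard_vertex i x) (guard_vertex i y) w.
End Graph.
Arguments Gsigma {X} x0 sigma _ _ _.

Inductive gpath (V : Type) (E : V -> V -> weight -> Prop) : V -> V -> weight -> Prop :=
| gpath_one u w e : E u w e -> gpath E u w e
| gpath_cons u v w e1 e2 : E u v e1 -> gpath E v w e2 -> gpath E u w (wadd e1 e2).

Definition has_neg_cycle (V : Type) (E : V -> V -> weight -> Prop) : Prop :=
  exists u e, gpath E u u e /\ wneg e.

Definition canon (V : Type) (E : V -> V -> weight -> Prop) (u w : V) (e : weight) : Prop :=
  u <> w /\ gpath E u w e /\ (forall e', gpath E u w e' -> wle e e').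

(* |G_sigma| : canonical form restricted to columns 0 and k, renumbered
   false (= 0) and true (= 1). *)
Definition col01 (k : nat) (c : bool) : 'I_k.+1 := if c then ord_max else ord0.

Definition Hsigma (X : finType) (x0 : X) (sigma : seq (transition X))
    (u w : bool * X) (e : weight) : Prop :=
  canon (Gsigma x0 sigma) (col01 (size sigma) u.1, u.2) (col01 (size sigma) w.1, w.2) e.

(* Rooted trees with at most two (ordered) children, node labels in
   option (X * X) (None = T), and weighted edges. *)
Inductive tree (X : Type) :=
| Leaf of option (X * X)
| Un of option (X * X) & weight & tree X
| Bin of option (X * X) & weight & tree X & weight & tree X.
Arguments Leaf {X}.

Definition troot (X : Type) (t : tree X) : option (X * X) :=
  match t with Leaf l => l | Un l _ _ => l | Bin l _ _ _ _ => l end.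

Fixpoint tweight (X : Type) (t : tree X) : weight :=
  match t with
  | Leaf _ => wzero
  | Un _ e t1 => wadd e (tweight t1)
  | Bin _ e1 t1 e2 t2 => wadd (wadd e1 (tweight t1)) (wadd e2 (tweight t2))
  end.

Fixpoint height (X : Type) (t : tree X) : nat :=
  match t with
  | Leaf _ => 0
  | Un _ _ t1 => (height t1).+1
  | Bin _ _ t1 _ t2 => (maxn (height t1) (height t2)).+1
  end.

Fixpoint pair_leaves (X : Type) (t : tree X) : seq (X * X) :=
  match t with
  | Leaf None => [::]
  | Leaf (Some p) => [:: p]
  | Un _ _ t1 => pair_leaves t1
  | Bin _ _ t1 _ t2 => pair_leaves t1 ++ pair_leaves t2
  end.

Definition complete (X : Type) (t : tree X) : Prop := pair_leaves t = [::].

Fixpoint is_ptree (X : Type) (H : bool * X -> bool * X -> weight -> Prop)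
    (t : tree X) : Prop :=
  match t with
  | Leaf _ => True
  | Un None _ _ => False
  | Un (Some (x, y)) e t1 =>
      is_ptree H t1 /\
      ((t1 = Leaf None /\ exists c, H (c, x) (c, y) e) \/
       (exists u v c c' e1 e2, troot t1 = Some (u, v) /\ c != c' /\
          H (c, x) (c', u) e1 /\ H (c', v) (c, y) e2 /\ e = wadd e1 e2))
  | Bin None _ _ _ _ => False
  | Bin (Some (x, y)) e1 t1 e2 t2 =>
      is_ptree H t1 /\ is_ptree H t2 /\ e1 = wzero /\ e2 = wzero /\
      exists z, troot t1 = Some (x, z) /\ troot t2 = Some (z, y)
  end.

Definition ptree_sigma (X : finType) (x0 : X) (sigma : seq (transition X)) (t : tree X) :=
  is_ptree (Hsigma x0 sigma) t.

Definition is_context (X : finType) (x0 : X) (sigma : seq (transition X))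
    (x y u v : X) (t : tree X) : Prop :=
  ptree_sigma x0 sigma t /\ troot t = Some (x, y) /\ pair_leaves t = [:: (u, v)].

Definition admits_pattern (X : finType) (x0 : X) (sigma : seq (transition X)) : Prop :=
  exists x y t, is_context x0 sigma x y x y t /\ wneg (tweight t).

(* Main.v *)
Require Import Defs.
From mathcomp Require Import all_boot all_order all_algebra.
From mathcomp Require Import zify.
From Stdlib Require Import Classical.
Set Implicit Arguments. Unset Strict Implicit. Unset Printing Implicit Defensive.
Import Order.TTheory GRing.Theory Num.Theory.

Lemma wleb (a b : weight) :
  wle a b = ((a.2 < b.2)%R || ((a.2 == b.2) && (a.1 || ~~ b.1))).
Proof.
case: a b => [a1 a2] [b1 b2]; rewrite /wle /wlt /= xpair_eqE.
by case: a1; case: b1; case: (ltgtP a2 b2).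
Qed.

Lemma wleE (a b : weight) :
  wle a b <-> ((a.2 < b.2)%R \/ (a.2 = b.2 /\ (a.1 || ~~ b.1))).
Proof.
rewrite wleb; split.
  by case/orP=> [->|/andP[/eqP -> ->]]; [left|right].
by case=> [->|[-> ->]] //; rewrite eqxx orbT.
Qed.

Ltac wdes := repeat match goal with
  | a : weight |- _ => let a1 := fresh a "1" in let a2 := fresh a "2" in case: a => a1 a2
  end.

Lemma wle_refl a : wle a a.
Proof. apply/wleE; right; split=> //; by case: a => [[] ?]. Qed.

Lemma wle_trans a b c : wle a b -> wle b c -> wle a c.
Proof.
wdes; rewrite !wleE /=.
case=> [h|[h1 h2]]; case=> [h'|[h1' h2']]; try (left; lia).
right; split; first lia. by move: h2 h2'; case: a1; case: b1; case: c1.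
Qed.

Lemma wle2 a b : wle a b -> (a.2 <= b.2)%R.
Proof. wdes; rewrite wleE /=; case=> [h|[h _]]; lia. Qed.

Lemma waddC a b : wadd a b = wadd b a.
Proof. wdes; rewrite /wadd /=; f_equal; [exact: orbC | exact: addrC]. Qed.

Lemma waddA a b c : wadd a (wadd b c) = wadd (wadd a b) c.
Proof. wdes; rewrite /wadd /=; f_equal; [exact: orbA | exact: addrA]. Qed.

Lemma waddAC a b c : wadd (wadd a b) c = wadd (wadd a c) b.
Proof. by rewrite -!waddA [wadd b c]waddC. Qed.

Lemma wadd0 a : wadd wzero a = a.
Proof. wdes; by rewrite /wadd /= add0r. Qed.

Lemma wadd_monor c a b : wle a b -> wle (wadd c a) (wadd c b).
Proof.
wdes; rewrite !wleE /wadd /=.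
case=> [h|[h1 h2]]; [left; lia| right; split; first lia].
by move: h2; case: a1; case: b1; case: c1.
Qed.

Lemma wadd_monol c a b : wle a b -> wle (wadd a c) (wadd b c).
Proof. by rewrite ![wadd _ c]waddC; apply: wadd_monor. Qed.

Lemma nwneg a : ~ wneg a -> wle wzero a.
Proof.
rewrite /wneg; wdes; rewrite wleE /wlt /= => h.
case: (ltgtP a2 0%R) h => hh h.
- by exfalso; apply: h.
- by left.
- right; split=> //; move: h; case: a1 => // h; exfalso; exact: h.
Qed.

Section Trees.
Variable X : finType.
Variable H : bool * X -> bool * X -> weight -> Prop.

Definition olab (l : option (X * X)) : seq (X * X) :=
  if l is Some p then [:: p] else [::].

Fixpoint labels (t : tree X) : seq (X * X) :=
  match t with
  | Leaf _ => [::]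
  | Un l _ t1 => olab l ++ labels t1
  | Bin l _ t1 _ t2 => olab l ++ labels t1 ++ labels t2
  end.

Inductive sub (s : tree X) : tree X -> Prop :=
| sub_refl : sub s s
| sub_un l e t1 : sub s t1 -> sub s (Un l e t1)
| sub_bl l e1 t1 e2 t2 : sub s t1 -> sub s (Bin l e1 t1 e2 t2)
| sub_br l e1 t1 e2 t2 : sub s t2 -> sub s (Bin l e1 t1 e2 t2).

Lemma labels_sub t p : p \in labels t -> exists s, sub s t /\ troot s = Some p.
Proof.
elim: t => [l|l e t1 IH|l e1 t1 IH1 e2 t2 IH2] //=.
- rewrite mem_cat; case/orP.
    by case: l => //= q; rewrite inE => /eqP ->; exists (Un (Some q) e t1); split=> //; constructor.
  by case/IH => s [? ?]; exists s; split=> //; constructor.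
- rewrite !mem_cat; case/orP; last case/orP.
  + by case: l => //= q; rewrite inE => /eqP ->; exists (Bin (Some q) e1 t1 e2 t2); split=> //; constructor.
  + by case/IH1 => s [? ?]; exists s; split=> //; apply: sub_bl.
  + by case/IH2 => s [? ?]; exists s; split=> //; apply: sub_br.
Qed.

Lemma sub_trans a b c : sub a b -> sub b c -> sub a c.
Proof.
move=> hab; elim=> //.
- by move=> *; constructor.
- by move=> *; apply: sub_bl.
- by move=> *; apply: sub_br.
Qed.

Lemma sub_ptree s t : sub s t -> is_ptree H t -> is_ptree H s.
Proof.
elim=> //.
- by move=> [[x y]|] e t1 _ IH /= => [[h _]|] //; apply: IH.
- by move=> [[x y]|] e1 t1 e2 t2 _ IH /= => [[h _]|] //; apply: IH.
- by move=> [[x y]|] e1 t1 e2 t2 _ IH /= => [[_ [h _]]|] //; apply: IH.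
Qed.

Lemma sub_complete s t : sub s t -> complete t -> complete s.
Proof.
rewrite /complete; elim=> //=.
all: move=> l e1 t1 e2 t2 _ IH hc; apply: IH; move: hc; by case: (pair_leaves t1).
Qed.

Lemma context s t p : sub s t -> is_ptree H t -> complete t -> troot s = Some p ->
  exists c, [/\ is_ptree H c, troot c = troot t, pair_leaves c = [:: p] &
             tweight t = wadd (tweight c) (tweight s)].
Proof.
rewrite /complete; elim.
- move=> _ _ ->; exists (Leaf (Some p)); split=> //=; by rewrite wadd0.
- move=> [[x y]|] e t1 hs IH //= [h1 hd] hc hr.
  have [c [c1 c2 c3 c4]] := IH h1 hc hr.
  exists (Un (Some (x, y)) e c); split=> //=.
  + split=> //; case: hd => [[ht1 _]|hb]; last by right; rewrite c2.
    by rewrite ht1 in hs; inversion hs; subst; rewrite /= in hr.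
  + by rewrite c4 waddA.
- move=> [[x y]|] e1 t1 e2 t2 hs IH //= [h1 [h2 [he1 [he2 hz]]]] hc hr.
  have hc1 : pair_leaves t1 = [::] by move: hc; case: (pair_leaves t1).
  have hc2 : pair_leaves t2 = [::] by move: hc; rewrite hc1.
  have [c [c1 c2 c3 c4]] := IH h1 hc1 hr.
  exists (Bin (Some (x, y)) e1 c e2 t2); split=> //=.
  + by do 4 (split=> //); rewrite c2.
  + by rewrite c3 hc2.
  + by rewrite c4 [wadd e1 _]waddA waddAC.
- move=> [[x y]|] e1 t1 e2 t2 hs IH //= [h1 [h2 [he1 [he2 hz]]]] hc hr.
  have hc1 : pair_leaves t1 = [::] by move: hc; case: (pair_leaves t1).
  have hc2 : pair_leaves t2 = [::] by move: hc; rewrite hc1.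
  have [c [c1 c2 c3 c4]] := IH h2 hc2 hr.
  exists (Bin (Some (x, y)) e1 t1 e2 c); split=> //=.
  + by do 4 (split=> //); rewrite c2.
  + by rewrite c3 hc1.
  + by rewrite c4 !waddA.
Qed.

End Trees.

Section Good.
Variable X : finType.
Variable H : bool * X -> bool * X -> weight -> Prop.

Fixpoint good (a : seq (X * X)) (t : tree X) : Prop :=
  match t with
  | Leaf _ => True
  | Un (Some p) _ t1 => p \notin a /\ good (p :: a) t1
  | Bin (Some p) _ t1 _ t2 => [/\ p \notin a, good (p :: a) t1 & good (p :: a) t2]
  | _ => False
  end.

Lemma good_height a t : uniq a -> good a t -> (size a + height t <= #|{: X * X}|)%N.
Proof.
elim: t a => [l|[p|] e t1 IH|[p|] e1 t1 IH1 e2 t2 IH2] a //= ua.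
- move=> _; rewrite addn0 -(card_uniqP ua); exact: max_card.
- case=> pa g1; have := IH (p :: a) _ g1; rewrite /= pa ua => /(_ isT).
  lia.
- case=> pa g1 g2.
  have := IH1 (p :: a) _ g1; rewrite /= pa ua => /(_ isT) h1.
  have := IH2 (p :: a) _ g2; rewrite /= pa ua => /(_ isT) h2.
  lia.
Qed.

Lemma good_anc a b t : {subset b <= a} -> good a t -> good b t.
Proof.
elim: t a b => [l|[p|] e t1 IH|[p|] e1 t1 IH1 e2 t2 IH2] a b //= sba.
- case=> pa g1; split; first by apply/negP => /sba; rewrite (negbTE pa).
  apply: IH g1 => q; rewrite !inE => /orP[->//|/sba ->]; by rewrite orbT.
- case=> pa g1 g2; split; first by apply/negP => /sba; rewrite (negbTE pa).
  + apply: IH1 g1 => q; rewrite !inE => /orP[->//|/sba ->]; by rewrite orbT.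
  + apply: IH2 g2 => q; rewrite !inE => /orP[->//|/sba ->]; by rewrite orbT.
Qed.

Lemma good_labels a t : good a t -> forall q, q \in labels t -> q \notin a.
Proof.
elim: t a => [l|[p|] e t1 IH|[p|] e1 t1 IH1 e2 t2 IH2] a //= g q.
- case: g => pa g1; rewrite inE => /orP[/eqP->//|/(IH _ g1 q)].
  by rewrite inE negb_or => /andP[].
- case: g => pa g1 g2; rewrite inE mem_cat => /orP[/eqP->//|/orP[/(IH1 _ g1 q)|/(IH2 _ g2 q)]];
  by rewrite inE negb_or => /andP[].
Qed.

Lemma good_ext t b : good [::] t -> (forall q, q \in labels t -> q \notin b) -> good b t.
Proof.
elim: t b => [l|[p|] e t1 IH|[p|] e1 t1 IH1 e2 t2 IH2] b //= g hb.
- case: g => _ g1; split; first by apply: hb; rewrite inE eqxx.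
  apply: IH; first by apply: good_anc g1 => q; rewrite inE.
  move=> q hq; rewrite inE negb_or; apply/andP; split.
    by have := good_labels g1 hq; rewrite inE.
  by apply: hb; rewrite inE hq orbT.
- case: g => _ g1 g2; split; first by apply: hb; rewrite inE eqxx.
  + apply: IH1; first by apply: good_anc g1 => q; rewrite inE.
    move=> q hq; rewrite inE negb_or; apply/andP; split.
      by have := good_labels g1 hq; rewrite inE.
    by apply: hb; rewrite inE mem_cat hq orbT.
  + apply: IH2; first by apply: good_anc g2 => q; rewrite inE.
    move=> q hq; rewrite inE negb_or; apply/andP; split.
      by have := good_labels g2 hq; rewrite inE.
    by apply: hb; rewrite inE mem_cat hq !orbT.
Qed.

Lemma good_sub s t a : sub s t -> good a t -> good [::] s.
Proof.
move=> h; elim: h a => [|l e t1 _ IH|l e1 t1 e2 t2 _ IH|l e1 t1 e2 t2 _ IH] a.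
- by apply: good_anc.
- by case: l => [p|] //= [_ g]; apply: IH g.
- by case: l => [p|] //= [_ g _]; apply: IH g.
- by case: l => [p|] //= [_ _ g]; apply: IH g.
Qed.

Hypothesis nopat : forall x y c, is_ptree H c -> troot c = Some (x, y) ->
  pair_leaves c = [:: (x, y)] -> ~ wneg (tweight c).

Lemma extract N s p : is_ptree H N -> complete N -> sub s N -> troot s = Some p ->
  troot N = Some p ->
  [/\ is_ptree H s, complete s & wle (tweight s) (tweight N)].
Proof.
move=> pN cN sN rs rN; split; [exact: sub_ptree sN pN | exact: sub_complete sN cN|].
case: p rs rN => x y rs rN.
have [c [c1 c2 c3 c4]] := context sN pN cN rs.
rewrite c4; rewrite -{1}(wadd0 (tweight s)); apply: wadd_monol.
apply: nwneg; apply: (nopat c1 _ c3); by rewrite c2 rN.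
Qed.

End Good.

Section Construct.
Variable X : finType.
Variable H : bool * X -> bool * X -> weight -> Prop.
Hypothesis nopat : forall x y c, is_ptree H c -> troot c = Some (x, y) ->
  pair_leaves c = [:: (x, y)] -> ~ wneg (tweight c).

Lemma finish N p (L : seq (X * X)) : is_ptree H N -> complete N -> troot N = Some p ->
  (p \in L -> exists s, [/\ sub s N, troot s = Some p & good [::] s]) ->
  (p \notin L -> good [::] N) ->
  exists t', [/\ is_ptree H t', complete t', troot t' = Some p, good [::] t' &
             wle (tweight t') (tweight N)].
Proof.
move=> pN cN rN h1 h2; case: (boolP (p \in L)) => hp.
- have [s [ss rs gs]] := h1 hp.
  have [ps cs ws] := extract nopat pN cN ss rs rN.
  by exists s; split.
- by exists N; split=> //; [exact: h2 | exact: wle_refl].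
Qed.

Lemma construct t : is_ptree H t -> complete t ->
  exists t', [/\ is_ptree H t', complete t', troot t' = troot t, good [::] t' &
             wle (tweight t') (tweight t)].
Proof.
elim: t => [l|[[x y]|] e t1 IH|[[x y]|] e1 t1 IH1 e2 t2 IH2] //=.
- by move=> _ ?; exists (Leaf l); split=> //; exact: wle_refl.
- move=> [p1 hd] c1.
  case: hd => [[ht1 ha]|hb].
    exists (Un (Some (x, y)) e t1); rewrite ht1; split=> //=; last exact: wle_refl.
    by split=> //; left.
  have [t1' [q1 q2 q3 q4 q5]] := IH p1 c1.
  have pN : is_ptree H (Un (Some (x, y)) e t1') by split=> //; right; rewrite q3.
  have hA : (x, y) \in labels t1' -> exists s, [/\ sub s (Un (Some (x, y)) e t1'), troot s = Some (x, y) & good [::] s].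
    move=> h; have [s [ss rs]] := labels_sub h; exists s; split=> //; [exact: sub_un | exact: good_sub q4].
  have hB : (x, y) \notin labels t1' -> good [::] (Un (Some (x, y)) e t1').
    move=> h; split=> //; apply: (good_ext (b := [:: (x,y)]) q4) => q hq; rewrite inE; apply/negP => /eqP eq.
    by rewrite -eq hq in h.
  have [t' [r1 r2 r3 r4 r5]] := finish pN q2 (erefl _) hA hB.
  exists t'; split=> //; apply: wle_trans r5 _; exact: wadd_monor.
- move=> [p1 [p2 [he1 [he2 [z [hr1 hr2]]]]]] cc.
  have c1 : complete t1 by move: cc; rewrite /complete /=; case: (pair_leaves t1).
  have c2 : complete t2 by move: cc; rewrite /complete /= c1.
  have [t1' [q1 q2 q3 q4 q5]] := IH1 p1 c1.
  have [t2' [s1 s2 s3 s4 s5]] := IH2 p2 c2.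
  have pN : is_ptree H (Bin (Some (x, y)) e1 t1' e2 t2').
    by do 4 (split=> //); exists z; rewrite q3 s3.
  have cN : complete (Bin (Some (x, y)) e1 t1' e2 t2') by rewrite /complete /= q2 s2.
  have hA : (x, y) \in labels t1' ++ labels t2' -> exists s, [/\ sub s (Bin (Some (x, y)) e1 t1' e2 t2'), troot s = Some (x, y) & good [::] s].
    move=> h; rewrite mem_cat in h; case/orP: h => h.
      have [s [ss rs]] := labels_sub h; exists s; split=> //; [exact: sub_bl | exact: good_sub q4].
    have [s [ss rs]] := labels_sub h; exists s; split=> //; [exact: sub_br | exact: good_sub s4].
  have hB : (x, y) \notin labels t1' ++ labels t2' -> good [::] (Bin (Some (x, y)) e1 t1' e2 t2').
    move=> h; split=> //.
      apply: (good_ext (b := [:: (x,y)]) q4) => q hq; rewrite inE; apply/negP => /eqP eq.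
      by rewrite -eq mem_cat hq in h.
    apply: (good_ext (b := [:: (x,y)]) s4) => q hq; rewrite inE; apply/negP => /eqP eq.
    by rewrite -eq mem_cat hq orbT in h.
  have [t' [r1 r2 r3 r4 r5]] := finish pN cN (erefl _) hA hB.
  exists t'; split=> //; apply: wle_trans r5 _.
  apply: wle_trans (wadd_monol _ (wadd_monor _ q5)) _.
  exact: wadd_monor (wadd_monor _ s5).
Qed.

End Construct.

Lemma Rbound (T : finType) (R : T -> T -> weight -> Prop)
  (hyp : forall u v e e', R u v e -> R u v e' -> (e.2 <= e'.2)%R) :
  exists N : nat, forall u v e, R u v e -> (- (N%:Z) <= e.2)%R.
Proof.
suff: forall l : seq (T * T), exists N : nat, forall u v e, (u, v) \in l -> R u v e ->
    (- (N%:Z) <= e.2)%R.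
  move=> /(_ (enum {: T * T})) [N hN]; exists N => u v e; apply: hN; by rewrite mem_enum.
elim => [|[u v] l [N hN]]; first by exists 0%N.
case: (classic (exists e0, R u v e0)) => [[e0 h0]|hn].
- exists (N + absz e0.2)%N => u' v' e; rewrite inE => /orP[/eqP [-> ->] | hl] hR.
  + have := hyp _ _ _ _ h0 hR; lia.
  + have := hN _ _ _ hl hR; lia.
- exists N => u' v' e; rewrite inE => /orP[/eqP [-> ->] | hl] hR.
  + by exfalso; apply: hn; exists e.
  + exact: hN hl hR.
Qed.

Lemma tw_bound (X : finType) (H : bool * X -> bool * X -> weight -> Prop) (N : nat)
  (hN : forall u v e, H u v e -> (- (N%:Z) <= e.2)%R) (t : tree X) :
  is_ptree H t -> (- ((2 * (N * 2 ^ height t))%N%:Z) <= (tweight t).2)%R.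
Proof.
elim: t => [l|[[x y]|] e t1 IH|[[x y]|] e1 t1 IH1 e2 t2 IH2] //=.
- move=> _; lia.
- move=> [p1 hd].
  have he : (- ((2 * N)%N%:Z) <= e.2)%R.
    case: hd => [[_ [c hc]]|[u [v [c [c' [f1 [f2 [_ [_ [h1 [h2 ->]]]]]]]]]]].
      have := hN _ _ _ hc; lia.
    have := hN _ _ _ h1; have := hN _ _ _ h2; rewrite /wadd /=; lia.
  have := IH p1; rewrite expnS mulnCA.
  have : (1 <= 2 ^ height t1)%N by rewrite expn_gt0.
  have : (N <= N * 2 ^ height t1)%N by rewrite leq_pmulr // expn_gt0.
  move: he; rewrite /wadd /=.
  set M := (N * 2 ^ height t1)%N; lia.
- move=> [p1 [p2 [-> [-> _]]]].
  have := IH1 p1; have := IH2 p2; rewrite expnS mulnCA.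
  have : (N * 2 ^ height t1 <= N * 2 ^ maxn (height t1) (height t2))%N
    by rewrite leq_mul2l leq_pexp2l ?leq_maxl ?orbT.
  have : (N * 2 ^ height t2 <= N * 2 ^ maxn (height t1) (height t2))%N
    by rewrite leq_mul2l leq_pexp2l ?leq_maxr ?orbT.
  rewrite /wadd /=.
  set M1 := (N * 2 ^ height t1)%N; set M2 := (N * 2 ^ height t2)%N.
  set M := (N * 2 ^ maxn _ _)%N; lia.
Qed.

Lemma nat_min (P : nat -> Prop) : (exists k, P k) ->
  exists k, P k /\ forall j, P j -> (k <= j)%N.
Proof.
move=> [k hk]; elim/ltn_ind: k hk => k IH hk.
case: (classic (exists j, P j /\ (j < k)%N)) => [[j [hj ljk]]|hn].
- exact: IH ljk hj.
- exists k; split=> // j hj; rewrite leqNgt; apply/negP => ljk; apply: hn; by exists j.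
Qed.

Theorem mainTheorem17 (X : finType) (x0 : X) (sigma : seq (transition X)) :
  ~ has_neg_cycle (Gsigma x0 sigma) ->
  ~ admits_pattern x0 sigma ->
  forall x y : X,
    (exists t, ptree_sigma x0 sigma t /\ complete t /\ troot t = Some (x, y)) ->
    exists t, [/\ ptree_sigma x0 sigma t, complete t, troot t = Some (x, y),
               (height t <= #|X| ^ 2)%N &
               forall t', ptree_sigma x0 sigma t' -> complete t' ->
                          troot t' = Some (x, y) -> wle (tweight t) (tweight t')].
Proof.
move=> _ nopat x y [t0 [pt0 [ct0 rt0]]].
rewrite /ptree_sigma in pt0 *.
set H := Hsigma x0 sigma in pt0 *.
have np : forall a b c, is_ptree H c -> troot c = Some (a, b) ->
    pair_leaves c = [:: (a, b)] -> ~ wneg (tweight c).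
  by move=> a b c h1 h2 h3 hw; apply: nopat; exists a, b, c.
have [N hN] : exists N : nat, forall u v e, H u v e -> (- (N%:Z) <= e.2)%R.
  apply: Rbound => u v e e' [_ [_ m]] [_ [g _]]; exact: wle2 (m _ g).
pose S t := [/\ is_ptree H t, complete t, troot t = Some (x, y) & good [::] t].
have hgood : forall t : tree X, good [::] t -> (height t <= #|X| ^ 2)%N.
  move=> t g; have := good_height (a := [::]) isT g; rewrite card_prod /= add0n.
  by rewrite -mulnn.
pose L := (2 * (N * 2 ^ (#|X| ^ 2)))%N.
have hlow : forall t, S t -> (- (L%:Z) <= (tweight t).2)%R.
  move=> t [p1 _ _ g]; have := tw_bound hN p1.
  have : (N * 2 ^ height t <= N * 2 ^ (#|X| ^ 2))%N
    by rewrite leq_mul2l leq_pexp2l ?hgood ?orbT.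
  rewrite /L; set A := (N * 2 ^ height t)%N; set B := (N * 2 ^ _)%N; lia.
pose P k := exists t, S t /\ (tweight t).2 = (k%:Z - L%:Z)%R.
have hP : forall t, S t -> P (absz ((tweight t).2 + L%:Z)%R).
  move=> t st; exists t; split=> //; have := hlow t st; lia.
have [t1 [q1 q2 q3 q4 q5]] := construct np pt0 ct0.
have st1 : S t1 by split=> //; rewrite q3.
have [k [[tk [stk wk]] kmin]] := nat_min (ex_intro _ _ (hP t1 st1)).
have [tm [stm wm hm]] : exists tm, [/\ S tm, (tweight tm).2 = (k%:Z - L%:Z)%R &
    forall t, S t -> (tweight t).2 = (k%:Z - L%:Z)%R -> (tweight t).1 -> (tweight tm).1].
  case: (classic (exists t, [/\ S t, (tweight t).2 = (k%:Z - L%:Z)%R & (tweight t).1])).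
    by move=> [t [st wt bt]]; exists t; split.
  move=> hn; exists tk; split=> //; move=> t st wt bt; exfalso; apply: hn; by exists t; split.
have hmin : forall t, S t -> wle (tweight tm) (tweight t).
  move=> t st; have := kmin _ (hP t st); have := hlow t st => hl hk.
  apply/wleE; rewrite wm.
  case: (ltgtP (k%:Z - L%:Z)%R (tweight t).2) => h.
  - by left.
  - exfalso; lia.
  - right; split=> //; case bt: (tweight t).1; last by rewrite orbT.
    by rewrite (hm t st (esym h) bt).
case: stm => m1 m2 m3 m4.
exists tm; split=> //; first exact: hgood.
move=> t' p' c' r'.
have [t'' [s1 s2 s3 s4 s5]] := construct np p' c'.
apply: wle_trans (hmin t'' _) s5; split=> //; by rewrite s3.
Qed.
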